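(* Let $\mathcal{Y}=\{0,1\}$, let $y_t\in\{0,1\}$ and $v_t\in[0,1]$ for $t\in T=\{1,\dots,n\}$, and let $s\colon\{0,1\}\times[0,1]\to[-1,1]$ be a consistent scoring function for the mean, i.e. $\mathbb{E}_{\phi}[s(\cdot,p)]\le\mathbb{E}_\phi[s(\cdot,c)]$ for every $p,c\in[0,1]$ where $\phi$ is Bernoulli($p$). For $\gamma\in\{v_t:t\in T\}$ let $T_\gamma=\{t:v_t=\gamma\}$. Then $$\sup_{\sigma\colon[0,1]\to[0,1]}\sum_{t\in T}\big(s(y_t,v_t)-s(y_t,\sigma(v_t))\big)\ \le\ 4\sum_{\gamma\in\{v_t:t\in T\}}|T_\gamma|\,\Big|\frac1{|T_\gamma|}\sum_{t\in T_\gamma}y_t-\gamma\Big|.$$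
   Context: $\mathbb{E}_\phi[f]=\phi(\{0\})f(0)+\phi(\{1\})f(1)$ for a distribution $\phi$ on $\{0,1\}$; Bernoulli($p$) puts mass $p$ on $1$. *)

(* Defs.v *)
From HB Require Import structures.
From mathcomp Require Import all_boot all_order all_algebra.
From mathcomp Require Import reals.
Set Implicit Arguments. Unset Strict Implicit. Unset Printing Implicit Defensive.
Import Order.TTheory GRing.Theory Num.Theory.
Local Open Scope ring_scope.

(* Y = {0,1} is encoded by bool (false = 0, true = 1). *)

Definition bern_expect (R : ringType) (p : R) (f : bool -> R) : R :=
  (1 - p) * f false + p * f true.

Definition consistent_mean (R : realFieldType) (s : bool -> R -> R) : Prop :=
  forall p c : R, 0 <= p <= 1 -> 0 <= c <= 1 ->
    bern_expect p (fun y => s y p) <= bern_expect p (fun y => s y c).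

Definition level_set (R : eqType) (n : nat) (v : 'I_n -> R) (g : R) : {set 'I_n} :=
  [set t | v t == g].

Definition values_of (R : eqType) (n : nat) (v : 'I_n -> R) : seq R :=
  undup [seq v t | t <- enum 'I_n].

(* Main.v *)
Require Import Defs.
From HB Require Import structures.
From mathcomp Require Import all_boot all_order all_algebra.
From mathcomp Require Import reals.
From mathcomp Require Import ring lra.
Import Order.TTheory GRing.Theory Num.Theory.
Local Open Scope ring_scope.

Lemma key_ineq (R : realFieldType) (a g d0 d1 : R) :
  g * d1 + (1 - g) * d0 <= 0 -> `|d1 - d0| <= 4 ->
  a * d1 + (1 - a) * d0 <= 4 * `|a - g|.
Proof.
move=> H1 H2.
have E : a * d1 + (1 - a) * d0 = (a - g) * (d1 - d0) + (g * d1 + (1 - g) * d0) by ring.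
rewrite E.
have H3 : (a - g) * (d1 - d0) <= `|a - g| * 4.
  apply: le_trans (ler_norm _) _; rewrite normrM.
  by apply: ler_wpM2l.
lra.
Qed.

Theorem mainTheorem19 (R : realType) (n : nat)
  (y : 'I_n -> bool) (v : 'I_n -> R) (s : bool -> R -> R)
  (hv : forall t, 0 <= v t <= 1)
  (hs : forall (b : bool) (p : R), 0 <= p <= 1 -> -1 <= s b p <= 1)
  (hcons : consistent_mean s) :
  forall sigma : R -> R, (forall x, 0 <= x <= 1 -> 0 <= sigma x <= 1) ->
    \sum_(t < n) (s (y t) (v t) - s (y t) (sigma (v t)))
    <= 4 * \sum_(g <- values_of v)
             #|level_set v g|%:R *
             `| (\sum_(t in level_set v g) (y t)%:R) / #|level_set v g|%:R - g |.
Proof.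
move=> sigma hsig.
pose F := fun t => s (y t) (v t) - s (y t) (sigma (v t)).
rewrite (eq_bigr F) //.
have uv : uniq (values_of v) by apply: undup_uniq.
have inv : forall t, v t \in values_of v.
  by move=> t; rewrite mem_undup; apply: map_f; rewrite mem_enum.
have -> : \sum_(t < n) F t = \sum_(t < n) \sum_(g <- values_of v | g == v t) F t.
  apply: eq_bigr => t _; rewrite -big_filter.
  have -> : [seq g <- values_of v | g == v t] = [:: v t] by exact: (filter_pred1_uniq uv (inv t)).
  by rewrite big_seq1.
under eq_bigr do rewrite big_mkcond.
rewrite exchange_big /= mulr_sumr big_seq [X in _ <= X]big_seq.
apply: ler_sum => g gin; rewrite -big_mkcond /=.
have [t0 _ vt0] : exists2 t0, t0 \in enum 'I_n & g = v t0.
  by apply/mapP; move: gin; rewrite mem_undup.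
have hg : 0 <= g <= 1 by rewrite vt0.
set L := level_set v g.
have -> : \sum_(t < n | g == v t) F t = \sum_(t in L) F t.
  by apply: eq_bigl => t; rewrite /L /level_set inE eq_sym.
set d0 := s false g - s false (sigma g).
set d1 := s true g - s true (sigma g).
have -> : \sum_(t in L) F t = \sum_(t in L) ((y t)%:R * d1 + (1 - (y t)%:R) * d0).
  apply: eq_bigr => t; rewrite /L /level_set inE /F => /eqP ->.
  rewrite /d0 /d1; case: (y t) => /=; ring.
rewrite big_split /= -!mulr_suml sumrB /= sumr_const.
set k := \sum_(t in L) (y t)%:R.
set m := #|L|%:R : R.
have mpos : 0 < m.
  rewrite /m ltr0n card_gt0; apply/set0Pn; exists t0.
  by rewrite /L /level_set inE vt0.
have mne : m != 0 by rewrite gt_eqF.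
have -> : k * d1 + (m - k) * d0 = m * ((k / m) * d1 + (1 - k / m) * d0).
  by field.
rewrite mulrCA; apply: ler_wpM2l; first exact: ltW.
apply: key_ineq.
  have := hcons g (sigma g) hg (hsig g hg); rewrite /bern_expect /d0 /d1.
  lra.
have := hs true g hg; have := hs false g hg.
have := hs true (sigma g) (hsig g hg); have := hs false (sigma g) (hsig g hg).
rewrite /d0 /d1 => /andP[? ?] /andP[? ?] /andP[? ?] /andP[? ?].
rewrite ler_norml; apply/andP; split; lra.
Qed.
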